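(* Let $f\in C^1([0,1])$ satisfy $f(0)=f(1)=0$, $f(u)>0$ for $u\in(0,1)$, $f'(0)>0$, $f(u)\leqslant f'(0)u$ for $u\in(0,1)$. For $\alpha\in\mathbb R$ and $\sigma>0$ let \[ k(x)=\frac{1}{\sqrt{2\pi\sigma}}\exp\Big(-\frac{(x-\alpha)^2}{2\sigma}\Big),\qquad r=\frac{\alpha}{\sqrt{2\sigma}}, \] and let $c_l^*,c_r^*$ be as in the context. If $f'(0)\geqslant1$, then $c_l^*<0<c_r^*$. If $f'(0)<1$, there exists a constant $r^*>0$ (depending only on $f'(0)$) such that: (i) if $r>r^*$, then $0<c_l^*<c_r^*$; (ii) if $r=r^*$, then $0=c_l^*<c_r^*$; (iii) if $-r^*<r<r^*$, then $c_l^*<0<c_r^*$; (iv) if $r=-r^*$, then $c_l^*<c_r^*=0$; (v) if $r<-r^*$, then $c_l^*<c_r^*<0$.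
   Context: $c_l^*=\sup_{\lambda<0}\{\lambda^{-1}[\int_{\mathbb R}k(x)e^{\lambda x}dx-1+f'(0)]\}$ and $c_r^*=\inf_{\lambda>0}\{\lambda^{-1}[\int_{\mathbb R}k(x)e^{\lambda x}dx-1+f'(0)]\}$ are the spreading speeds to the left and right of $u_t=\int_{\mathbb R}k(x-y)u(t,y)dy-u+f(u)$. *)

(* Defs.v *)
From Stdlib Require Import Reals Lra.
From Coquelicot Require Import Coquelicot.
Open Scope R_scope.

Definition C1_on_01 (f fp : R -> R) : Prop :=
  (forall x, 0 <= x <= 1 ->
     filterlim (fun y => (f y - f x) / (y - x))
       (within (fun y => 0 <= y <= 1 /\ y <> x) (locally x)) (locally (fp x)))
  /\
  (forall x, 0 <= x <= 1 ->
     filterlim fp (within (fun y => 0 <= y <= 1) (locally x)) (locally (fp x))).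

Definition gauss_kernel (alpha sigma : R) (x : R) : R :=
  / sqrt (2 * PI * sigma) * exp (- (x - alpha) ^ 2 / (2 * sigma)).

Definition laplace_k (k : R -> R) (lam : R) : R :=
  RInt_gen (fun x => k x * exp (lam * x))
    (Rbar_locally m_infty) (Rbar_locally p_infty).

Definition c_left (k : R -> R) (d : R) : Rbar :=
  Lub_Rbar (fun y => exists lam, lam < 0 /\ y = (laplace_k k lam - 1 + d) / lam).

Definition c_right (k : R -> R) (d : R) : Rbar :=
  Glb_Rbar (fun y => exists lam, 0 < lam /\ y = (laplace_k k lam - 1 + d) / lam).

(* Main.v *)
Require Import Defs.
From Stdlib Require Import Reals Lra.
From Coquelicot Require Import Coquelicot.
Open Scope R_scope.
Definition gaussf (t : R) := exp (- (t * t)).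
Definition Phi (y : R) := RInt gaussf 0 y.
Lemma gaussf_cont x : continuous gaussf x.
Proof. unfold gaussf. apply (ex_derive_continuous (V:=R_NormedModule)). auto_derive. auto. Qed.
Lemma Phi_is_RInt a b : is_RInt gaussf a b (RInt gaussf a b).
Proof. apply (RInt_correct (V:=R_CompleteNormedModule)). apply (ex_RInt_continuous (V:=R_CompleteNormedModule)) => z _. apply gaussf_cont. Qed.
Lemma Phi_deriv x : derivable_pt_lim Phi x (gaussf x).
Proof.
apply is_derive_Reals. unfold Phi.
apply (is_derive_RInt (V:=R_NormedModule) gaussf (fun y => RInt gaussf 0 y) 0 x).
- exists (mkposreal 1 Rlt_0_1) => y _. apply Phi_is_RInt.
- apply gaussf_cont.
Qed.
Lemma Phi0 : Phi 0 = 0.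
Proof. unfold Phi. exact (RInt_point (V:=R_CompleteNormedModule) 0 gaussf). Qed.
Lemma cos_zero_PI2 p : 0 < p < 2 -> cos p = 0 -> p = PI / 2.
Proof.
intros Hp Hc. assert (H3 := PI2_3_2). apply cos_inj; try lra. rewrite Hc, cos_PI2. reflexivity.
Qed.
From HB Require Import structures.
From mathcomp Require all_ssreflect_compat ssralg ssrnum interval.
From mathcomp Require boolp classical_sets functions reals interval_inference ereal.
From mathcomp Require topology tvs normedtype sequences real_interval.
From mathcomp Require measure lebesgue_measure lebesgue_integral numfun realfun.
From mathcomp Require exp trigo derive ftc gauss_integral.
From mathcomp Require Rstruct Rstruct_topology.
Module Bridge.
Import all_ssreflect_compat ssralg ssrnum interval.
Import boolp classical_sets functions reals interval_inference ereal.
Import topology tvs normedtype sequences real_interval.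
Import measure lebesgue_measure lebesgue_integral numfun realfun.
Import exp trigo derive ftc gauss_integral.
Import Rstruct Rstruct_topology.
Import Order.TTheory GRing.Theory Num.Theory.
Import numFieldNormedType.Exports.
Local Open Scope classical_set_scope.
Local Open Scope ring_scope.
Definition RR : realType := R.

Lemma deriv_bridge (F : RR -> RR) (x l : RR) :
  derivable_pt_lim F x l -> derivable F x 1 /\ F^`() x = l.
Proof.
move=> H.
have cv : (fun h : RR => h^-1 * (F (h + x) - F x)) @ 0^' --> l.
  apply/cvgrPdist_lt => e /RltP e0.
  have [d Hd] := H e e0.
  near=> h.
  have hn0 : h != 0 by near: h; exact: nbhs_dnbhs_neq.
  have hd : `|h| < d.
    near: h. apply: dnbhs0_lt. apply/RltP. exact: cond_pos.
  have := Hd h (elimN eqP hn0).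
  have hd' : Rlt (Rabs h) d by rewrite RabsE; apply/RltP.
  move=> /(_ hd') /RltP. rewrite RabsE.
  move=> H2; rewrite distrC (addrC h x) mulrC; exact: H2.
split.
  apply/cvg_ex; exists l.
  apply: cvg_trans cv. apply: near_eq_cvg. near=> h.
  by rewrite /= /GRing.scale /= mulr1.
rewrite derive1E. apply/cvg_lim => //.
  apply: cvg_trans cv. apply: near_eq_cvg. near=> h.
  by rewrite /= /GRing.scale /= mulr1.
Unshelve. all: end_near.
Qed.

Lemma Phi_der (x : RR) : derivable (Phi : RR -> RR) x 1 /\ (Phi : RR -> RR)^`() x = gaussf x.
Proof. exact: deriv_bridge (Phi_deriv x). Qed.

Lemma gauss_funE (x : RR) : gauss_fun x = gaussf x.
Proof. by rewrite /gauss_fun /gaussf RexpE expr2. Qed.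

Lemma Phi_cont (x : RR) : {for x, continuous (Phi : RR -> RR)}.
Proof. exact/differentiable_continuous/derivable1_diffP/(Phi_der x).1. Qed.

Lemma integral0_gaussE (b : RR) : 0 < b ->
  gauss_integral_proof.integral0_gauss b = Phi b.
Proof.
move=> b0.
have := @continuous_FTC2 RR gauss_fun Phi 0 b b0.
move=> H; rewrite /gauss_integral_proof.integral0_gauss /Rintegral H //=.
- by rewrite Phi0 subr0.
- apply: continuous_subspaceT. exact: continuous_gauss_fun.
- split.
  + by move=> x _; exact: (Phi_der x).1.
  + exact/cvg_at_right_filter/Phi_cont.
  + exact/cvg_at_left_filter/Phi_cont.
- by move=> x _; rewrite (Phi_der x).2 gauss_funE.
Qed.

Lemma RcosE (x : RR) : Rtrigo_def.cos x = cos x.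
Proof.
apply/esym; rewrite /Rtrigo_def.cos; case: exist_cos => y.
rewrite /cos_in /infinite_sum => cos_ub.
suff H : series (cos_coeff' x) @ \oo --> y.
  exact: (cvg_unique _ (@cvg_cos_coeff' RR x) H).
rewrite -cvg_shiftS; apply/cvgrPdist_lt => e /RltP /cos_ub[N HN].
near=> n.
have nN : (n >= N)%coq_nat by apply/ssrnat.leP; near: n; exact: nbhs_infty_ge.
move: HN => /(_ _ nN) /[!RdistE] /RltP /=.
rewrite distrC sum_f_R0E /series /=.
suff -> : \sum_(0 <= k < n.+1) (cos_n k * x² ^ k)%R = \sum_(0 <= k < n.+1) cos_coeff' x k by [].
apply: eq_bigr => k _.
rewrite /cos_n /cos_coeff' RpowE RpowE /Rsqr RdivE factE INRE.
have -> : ((2 * k)%coq_nat) = k.*2 by rewrite -ssrnat.mul2n.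
rewrite RmultE -expr2 -exprM ssrnat.mul2n.
by rewrite [RHS]mulrAC.
Unshelve. all: end_near.
Qed.

Lemma pi_PI : pi = (PI : RR).
Proof.
have [h1 h2] := andP (@pihalf_02 RR).
have E : Rtrigo_def.cos (Rdiv pi 2) = 0.
  have two : IZR 2 = 2 :> RR by rewrite IZRposE INRE.
  by rewrite RdivE RcosE two cos_pihalf.
have two : IZR 2 = 2 :> RR by rewrite IZRposE INRE.
have := cos_zero_PI2 (Rdiv pi 2).
rewrite !RdivE two.
move=> /(_ _ E) H.
have : pi / 2 = PI / 2 :> RR.
  apply: H. split; apply/RltP => //.
move=> /(congr1 (fun z => z * 2)). rewrite !mulfVK //.
Qed.

Lemma Phi_ge0 (x : RR) : 0 < x -> 0 <= Phi x.
Proof. by move=> x0; rewrite -integral0_gaussE // gauss_integral_proof.integral0_gauss_ge0. Qed.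

Lemma Phi_cvg : (Phi : RR -> RR) x @[x --> +oo] --> Num.sqrt pi / 2.
Proof.
have h1 : ((Phi : RR -> RR) x)^+2 @[x --> +oo] --> pi / 4.
  apply: cvg_trans (gauss_integral_proof.cvg_integral0_gauss_sqr (R:=RR)).
  apply: near_eq_cvg. near=> y. rewrite integral0_gaussE //.
have : Num.sqrt ((Phi : RR -> RR) x ^+ 2) @[x --> +oo] --> Num.sqrt (pi / 4).
  apply: continuous_cvg => //. exact: sqrt_continuous.
rewrite sqrtrM ?pi_ge0// sqrtrV// (_ : 4 = 2 ^+ 2); last first.
  by rewrite expr2 -natrM.
rewrite sqrtr_sqr ger0_norm//.
apply: cvg_trans. apply: near_eq_cvg. near=> y.
rewrite sqrtr_sqr ger0_norm //. apply: Phi_ge0.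
near: y. exact: nbhs_pinfty_gt.
Unshelve. all: end_near.
Qed.

Lemma lim_bridge (g : RR -> RR) (l : RR) :
  g x @[x --> +oo] --> l -> is_lim g p_infty l.
Proof.
move=> /cvgrPdist_lt H. apply/is_lim_spec => eps.
have e0 : 0 < (eps : RR) by apply/RltP; exact: cond_pos.
have [M [_ HM]] := H eps e0.
exists M => x /RltP Mx.
have := HM x Mx. rewrite distrC => /RltP. by rewrite RabsE.
Qed.

Lemma Phi_lim : is_lim Phi p_infty (Rdiv (sqrt PI) (IZR 2)).
Proof.
have E : Rdiv (sqrt PI) (IZR 2) = Num.sqrt pi / 2 :> RR.
  by rewrite RdivE RsqrtE pi_PI IZRposE INRE.
rewrite E. exact: (@lim_bridge Phi _ Phi_cvg).
Qed.

End Bridge.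

Lemma Phi_opp y : Phi (- y) = - Phi y.
Proof.
unfold Phi.
assert (H := Phi_is_RInt 0 y).
assert (H2 : is_RInt gaussf (-1 * 0 + 0) (-1 * (- y) + 0) (RInt gaussf 0 y)).
{ replace (-1 * 0 + 0) with 0 by ring. replace (-1 * (- y) + 0) with y by ring. exact H. }
apply (is_RInt_comp_lin (V:=R_NormedModule)) in H2.
apply (is_RInt_opp (V:=R_NormedModule)) in H2.
apply (is_RInt_ext (V:=R_NormedModule)) with (g := gaussf) in H2.
- apply (is_RInt_unique (V:=R_CompleteNormedModule)) in H2. rewrite H2. reflexivity.
- intros x _. unfold gaussf. simpl. unfold scal; simpl. unfold mult, opp; simpl.
  replace ((-1 * x + 0) * (-1 * x + 0)) with (x * x) by ring. ring.
Qed.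

Lemma Phi_lim_m : is_lim Phi m_infty (- (sqrt PI / 2)).
Proof.
apply is_lim_ext with (f := fun y => - Phi (- y)).
{ intros y. rewrite Phi_opp. ring. }
apply (is_lim_opp (fun y => Phi (- y)) m_infty (sqrt PI / 2)).
apply (is_lim_comp Phi (fun y => - y) m_infty (sqrt PI / 2) p_infty).
- exact Bridge.Phi_lim.
- apply (is_lim_opp (fun y => y) m_infty m_infty). apply is_lim_id.
- exists 0. intros x _. discriminate.
Qed.

Lemma Phi_is_derive y : is_derive Phi y (gaussf y).
Proof. apply is_derive_Reals. apply Phi_deriv. Qed.

Lemma Rbar_mult_pinf (a b : R) : 0 < a -> Rbar_plus (Rbar_mult a p_infty) b = p_infty.
Proof. intros Ha. simpl. destruct (Rle_dec 0 a); [|lra]. destruct (Rle_lt_or_eq_dec 0 a r); [reflexivity|lra]. Qed.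
Lemma Rbar_mult_minf (a b : R) : 0 < a -> Rbar_plus (Rbar_mult a m_infty) b = m_infty.
Proof. intros Ha. simpl. destruct (Rle_dec 0 a); [|lra]. destruct (Rle_lt_or_eq_dec 0 a r); [reflexivity|lra]. Qed.

Section Lap.
Variables (alpha sigma lam : R).
Hypothesis Hs : 0 < sigma.
Let K := / sqrt (2 * PI * sigma).
Let E := alpha * lam + sigma * lam ^ 2 / 2.
Let s := sqrt (2 * sigma).
Let beta := alpha + sigma * lam.
Let a := / s.
Let b := - beta / s.
Let C := K * exp E * s.
Let Psi x := C * Phi (a * x + b).
Let g x := gauss_kernel alpha sigma x * exp (lam * x).

Lemma s_pos : 0 < s.
Proof. unfold s. apply sqrt_lt_R0. lra. Qed.
Lemma s_sq : s * s = 2 * sigma.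
Proof. unfold s. apply sqrt_sqrt. lra. Qed.

Lemma Psi_deriv x : is_derive Psi x (g x).
Proof.
assert (H1 : is_derive (fun x => a * x + b) x a).
{ auto_derive; auto. ring. }
assert (H2 := is_derive_comp Phi (fun x => a * x + b) x _ _ (Phi_is_derive (a * x + b)) H1).
assert (H3 := is_derive_scal _ x C _ H2).
assert (Heq : C * scal a (gaussf (a * x + b)) = g x).
{ unfold scal; simpl; unfold mult; simpl.
  unfold g, gauss_kernel, gaussf, C, a, b.
  assert (Hsp := s_pos). assert (Hsq := s_sq).
  replace ((/ s * x + - beta / s) * (/ s * x + - beta / s)) with ((x - beta) ^ 2 / (s * s)) by (field; lra).
  rewrite Hsq.
  replace (K * exp E * s * (/ s * exp (- ((x - beta) ^ 2 / (2 * sigma)))))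
    with (K * (exp E * exp (- ((x - beta) ^ 2 / (2 * sigma))))) by (field; lra).
  rewrite Rmult_assoc, <- !exp_plus. fold K. f_equal. f_equal.
  unfold E, beta. field. lra. }
rewrite <- Heq. unfold Psi. exact H3.
Qed.

Lemma a_pos : 0 < a.
Proof. unfold a. apply Rinv_0_lt_compat. apply s_pos. Qed.

Lemma Psi_lim_p : is_lim Psi p_infty (C * (sqrt PI / 2)).
Proof.
unfold Psi.
apply (is_lim_scal_l (fun x => Phi (a * x + b)) C p_infty (sqrt PI / 2)).
apply is_lim_comp_lin.
- rewrite Rbar_mult_pinf; [exact Bridge.Phi_lim | exact a_pos].
- assert (H := a_pos). lra.
Qed.

Lemma Psi_lim_m : is_lim Psi m_infty (C * (- (sqrt PI / 2))).
Proof.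
unfold Psi.
apply (is_lim_scal_l (fun x => Phi (a * x + b)) C m_infty (- (sqrt PI / 2))).
apply is_lim_comp_lin.
- rewrite Rbar_mult_minf; [exact Phi_lim_m | exact a_pos].
- assert (H := a_pos). lra.
Qed.

Lemma Psi_Derive : Derive Psi = g.
Proof.
apply FunctionalExtensionality.functional_extensionality. intros x.
apply is_derive_unique. apply Psi_deriv.
Qed.

Lemma g_cont x : continuous g x.
Proof.
unfold g, gauss_kernel. apply (ex_derive_continuous (V:=R_NormedModule)). auto_derive. auto.
Qed.

Lemma laplace_val : is_RInt_gen g (Rbar_locally m_infty) (Rbar_locally p_infty)
   (C * (sqrt PI / 2) - C * (- (sqrt PI / 2))).
Proof.
rewrite <- Psi_Derive.
apply is_RInt_gen_Derive.
- apply filter_forall. intros ab x _. eexists. apply Psi_deriv.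
- apply filter_forall. intros ab x _. rewrite Psi_Derive. apply g_cont.
- exact Psi_lim_m.
- exact Psi_lim_p.
Qed.

Lemma C_val : C * (sqrt PI / 2) - C * (- (sqrt PI / 2)) = exp E.
Proof.
unfold C, K. fold s.
assert (H : sqrt (2 * PI * sigma) = s * sqrt PI).
{ unfold s. rewrite <- sqrt_mult; try lra. f_equal; ring. assert (H := PI_RGT_0); lra. }
rewrite H. assert (Hs1 := s_pos). assert (Hp : 0 < sqrt PI) by (apply sqrt_lt_R0; apply PI_RGT_0).
field. lra.
Qed.
End Lap.

Lemma laplace_gauss alpha sigma lam : 0 < sigma ->
  laplace_k (gauss_kernel alpha sigma) lam = exp (alpha * lam + sigma * lam ^ 2 / 2).
Proof.
intros Hs. unfold laplace_k.
rewrite <- (C_val alpha sigma lam Hs).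
apply (is_RInt_gen_unique (V:=R_CompleteNormedModule)).
apply laplace_val. exact Hs.
Qed.

Definition Gf (alpha sigma d lam : R) := exp (alpha * lam + sigma * lam ^ 2 / 2) - 1 + d.

Lemma cl_le alpha sigma d (m : R) : 0 < sigma ->
  (forall lam, lam < 0 -> Gf alpha sigma d lam / lam <= m) ->
  Rbar_le (c_left (gauss_kernel alpha sigma) d) m.
Proof.
intros Hs H. unfold c_left.
destruct (Lub_Rbar_correct (fun y => exists lam, lam < 0 /\ y = (laplace_k (gauss_kernel alpha sigma) lam - 1 + d) / lam)) as [_ H2].
apply H2. intros y [lam [Hl ->]]. simpl. rewrite laplace_gauss by exact Hs. apply H. exact Hl.
Qed.

Lemma cl_ge alpha sigma d lam : 0 < sigma -> lam < 0 ->
  Rbar_le (Gf alpha sigma d lam / lam) (c_left (gauss_kernel alpha sigma) d).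
Proof.
intros Hs Hl. unfold c_left.
destruct (Lub_Rbar_correct (fun y => exists lam, lam < 0 /\ y = (laplace_k (gauss_kernel alpha sigma) lam - 1 + d) / lam)) as [H1 _].
apply H1. exists lam. split; [exact Hl|]. rewrite laplace_gauss by exact Hs. reflexivity.
Qed.

Lemma cr_ge alpha sigma d (m : R) : 0 < sigma ->
  (forall lam, 0 < lam -> m <= Gf alpha sigma d lam / lam) ->
  Rbar_le m (c_right (gauss_kernel alpha sigma) d).
Proof.
intros Hs H. unfold c_right.
destruct (Glb_Rbar_correct (fun y => exists lam, 0 < lam /\ y = (laplace_k (gauss_kernel alpha sigma) lam - 1 + d) / lam)) as [_ H2].
apply H2. intros y [lam [Hl ->]]. simpl. rewrite laplace_gauss by exact Hs. apply H. exact Hl.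
Qed.

Lemma cr_le alpha sigma d lam : 0 < sigma -> 0 < lam ->
  Rbar_le (c_right (gauss_kernel alpha sigma) d) (Gf alpha sigma d lam / lam).
Proof.
intros Hs Hl. unfold c_right.
destruct (Glb_Rbar_correct (fun y => exists lam, 0 < lam /\ y = (laplace_k (gauss_kernel alpha sigma) lam - 1 + d) / lam)) as [H1 _].
apply H1. exists lam. split; [exact Hl|]. rewrite laplace_gauss by exact Hs. reflexivity.
Qed.

Lemma Gf_ge1 alpha sigma d lam : d + alpha * lam + sigma * lam ^ 2 / 2 <= Gf alpha sigma d lam.
Proof. unfold Gf. pose proof (exp_ineq1_le (alpha * lam + sigma * lam ^ 2 / 2)). lra. Qed.

Definition m0 alpha sigma d := exp (- (alpha ^ 2 / (2 * sigma))) - 1 + d.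

Lemma Gf_ge2 alpha sigma d lam : 0 < sigma -> m0 alpha sigma d <= Gf alpha sigma d lam.
Proof.
intros Hs. unfold Gf, m0.
assert (- (alpha ^ 2 / (2 * sigma)) <= alpha * lam + sigma * lam ^ 2 / 2).
{ assert (alpha * lam + sigma * lam ^ 2 / 2 + alpha ^ 2 / (2 * sigma) = (sigma * lam + alpha) ^ 2 / (2 * sigma)) by (field; lra).
  assert (0 <= (sigma * lam + alpha) ^ 2 / (2 * sigma)).
  { apply Rdiv_le_0_compat; [apply pow2_ge_0 | lra]. }
  lra. }
assert (exp (- (alpha ^ 2 / (2 * sigma))) <= exp (alpha * lam + sigma * lam ^ 2 / 2)).
{ destruct (Rle_lt_or_eq_dec _ _ H) as [H1|H1]; [left; apply exp_increasing; exact H1 | rewrite H1; lra]. }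
lra.
Qed.

Lemma Gf_at_min alpha sigma d : 0 < sigma -> Gf alpha sigma d (- alpha / sigma) = m0 alpha sigma d.
Proof.
intros Hs. unfold Gf, m0. f_equal. f_equal. f_equal. field. lra.
Qed.

Lemma cl_lt_cr alpha sigma d : 0 < sigma -> 0 < d ->
  Rbar_lt (c_left (gauss_kernel alpha sigma) d) (c_right (gauss_kernel alpha sigma) d).
Proof.
intros Hs Hd.
set (t := sqrt (2 * d * sigma)).
assert (Ht : 0 < t) by (apply sqrt_lt_R0; nra).
assert (Ht2 : t * t = 2 * d * sigma) by (apply sqrt_sqrt; nra).
apply Rbar_le_lt_trans with (alpha - t).
- apply cl_le; [exact Hs|]. intros lam Hl.
  pose proof (Gf_ge1 alpha sigma d lam).
  assert (Hq : 0 <= d + sigma * lam ^ 2 / 2 + t * lam).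
  { assert (E : (sigma * lam + t) ^ 2 = 2 * sigma * (d + sigma * lam ^ 2 / 2 + t * lam))
      by ((replace ((sigma * lam + t) ^ 2) with (sigma ^ 2 * lam ^ 2 + 2 * sigma * lam * t + t * t) by ring); rewrite Ht2; field).
    assert (0 <= (sigma * lam + t) ^ 2) by apply pow2_ge_0. nra. }
  apply Rmult_le_reg_r with (- lam); [lra|].
  replace (Gf alpha sigma d lam / lam * - lam) with (- Gf alpha sigma d lam) by (field; lra).
  nra.
- apply Rbar_lt_le_trans with (alpha + t).
  + simpl. lra.
  + apply cr_ge; [exact Hs|]. intros lam Hl.
    pose proof (Gf_ge1 alpha sigma d lam).
    assert (Hq : 0 <= d + sigma * lam ^ 2 / 2 - t * lam).
    { assert (E : (sigma * lam - t) ^ 2 = 2 * sigma * (d + sigma * lam ^ 2 / 2 - t * lam))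
        by ((replace ((sigma * lam - t) ^ 2) with (sigma ^ 2 * lam ^ 2 - 2 * sigma * lam * t + t * t) by ring); rewrite Ht2; field).
      assert (0 <= (sigma * lam - t) ^ 2) by apply pow2_ge_0. nra. }
    apply Rmult_le_reg_r with lam; [lra|].
    replace (Gf alpha sigma d lam / lam * lam) with (Gf alpha sigma d lam) by (field; lra).
    nra.
Qed.

Lemma abs_facts a : a <= Rabs a /\ - a <= Rabs a.
Proof. split; [apply Rle_abs|]. rewrite <- Rabs_Ropp. apply Rle_abs. Qed.

Lemma cr_pos alpha sigma d : 0 < sigma -> 0 < d -> 0 < m0 alpha sigma d ->
  Rbar_lt 0 (c_right (gauss_kernel alpha sigma) d).
Proof.
intros Hs Hd Hm.
set (L := 2 * (1 + Rabs alpha) / sigma).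
destruct (abs_facts alpha) as [HA1 HA2].
assert (HL : 0 < L) by (unfold L; apply Rdiv_lt_0_compat; lra).
assert (HsL : sigma * L = 2 * (1 + Rabs alpha)) by (unfold L; field; lra).
set (c := m0 alpha sigma d / (L + m0 alpha sigma d)).
assert (Hc : 0 < c) by (unfold c; apply Rdiv_lt_0_compat; lra).
assert (Hc1 : c <= 1).
{ unfold c. apply Rmult_le_reg_r with (L + m0 alpha sigma d); [lra|].
  replace (m0 alpha sigma d / (L + m0 alpha sigma d) * (L + m0 alpha sigma d)) with (m0 alpha sigma d) by (field; lra). lra. }
assert (HcL : c * L <= m0 alpha sigma d).
{ unfold c. apply Rmult_le_reg_r with (L + m0 alpha sigma d); [lra|].
  replace (m0 alpha sigma d / (L + m0 alpha sigma d) * L * (L + m0 alpha sigma d)) with (m0 alpha sigma d * L) by (field; lra). nra. }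
apply Rbar_lt_le_trans with c; [simpl; exact Hc|].
apply cr_ge; [exact Hs|]. intros lam Hl.
apply Rmult_le_reg_r with lam; [exact Hl|].
replace (Gf alpha sigma d lam / lam * lam) with (Gf alpha sigma d lam) by (field; lra).
pose proof (Gf_ge1 alpha sigma d lam). pose proof (Gf_ge2 alpha sigma d lam Hs).
destruct (Rle_lt_dec lam L) as [H1|H1].
- nra.
- assert (sigma * lam >= 2 * (1 + Rabs alpha)) by nra. nra.
Qed.

Lemma cl_neg alpha sigma d : 0 < sigma -> 0 < d -> 0 < m0 alpha sigma d ->
  Rbar_lt (c_left (gauss_kernel alpha sigma) d) 0.
Proof.
intros Hs Hd Hm.
set (L := 2 * (1 + Rabs alpha) / sigma).
destruct (abs_facts alpha) as [HA1 HA2].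
assert (HL : 0 < L) by (unfold L; apply Rdiv_lt_0_compat; lra).
assert (HsL : sigma * L = 2 * (1 + Rabs alpha)) by (unfold L; field; lra).
set (c := m0 alpha sigma d / (L + m0 alpha sigma d)).
assert (Hc : 0 < c) by (unfold c; apply Rdiv_lt_0_compat; lra).
assert (Hc1 : c <= 1).
{ unfold c. apply Rmult_le_reg_r with (L + m0 alpha sigma d); [lra|].
  replace (m0 alpha sigma d / (L + m0 alpha sigma d) * (L + m0 alpha sigma d)) with (m0 alpha sigma d) by (field; lra). lra. }
assert (HcL : c * L <= m0 alpha sigma d).
{ unfold c. apply Rmult_le_reg_r with (L + m0 alpha sigma d); [lra|].
  replace (m0 alpha sigma d / (L + m0 alpha sigma d) * L * (L + m0 alpha sigma d)) with (m0 alpha sigma d * L) by (field; lra). nra. }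
apply Rbar_le_lt_trans with (- c); [|simpl; lra].
apply cl_le; [exact Hs|]. intros lam Hl.
apply Rmult_le_reg_r with (- lam); [lra|].
replace (Gf alpha sigma d lam / lam * - lam) with (- Gf alpha sigma d lam) by (field; lra).
pose proof (Gf_ge1 alpha sigma d lam). pose proof (Gf_ge2 alpha sigma d lam Hs).
destruct (Rle_lt_dec (- lam) L) as [H1|H1].
- nra.
- assert (sigma * (- lam) >= 2 * (1 + Rabs alpha)) by nra. nra.
Qed.

Lemma cr_neg alpha sigma d : 0 < sigma -> alpha < 0 -> m0 alpha sigma d < 0 ->
  Rbar_lt (c_right (gauss_kernel alpha sigma) d) 0.
Proof.
intros Hs Ha Hm.
assert (Hl : 0 < - alpha / sigma) by (apply Rdiv_lt_0_compat; lra).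
apply Rbar_le_lt_trans with (Gf alpha sigma d (- alpha / sigma) / (- alpha / sigma)).
- apply cr_le; assumption.
- simpl. rewrite Gf_at_min by exact Hs.
  assert (0 < / (- alpha / sigma)) by (apply Rinv_0_lt_compat; exact Hl).
  unfold Rdiv at 1. nra.
Qed.

Lemma cl_pos alpha sigma d : 0 < sigma -> 0 < alpha -> m0 alpha sigma d < 0 ->
  Rbar_lt 0 (c_left (gauss_kernel alpha sigma) d).
Proof.
intros Hs Ha Hm.
assert (Hl : - alpha / sigma < 0).
{ assert (0 < alpha / sigma) by (apply Rdiv_lt_0_compat; lra).
  replace (- alpha / sigma) with (- (alpha / sigma)) by (field; lra). lra. }
apply Rbar_lt_le_trans with (Gf alpha sigma d (- alpha / sigma) / (- alpha / sigma)).
- simpl. rewrite Gf_at_min by exact Hs.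
  assert (/ (- alpha / sigma) < 0) by (apply Rinv_lt_0_compat; exact Hl).
  unfold Rdiv at 1. nra.
- apply cl_ge; assumption.
Qed.

Lemma cr_zero alpha sigma d : 0 < sigma -> alpha < 0 -> m0 alpha sigma d = 0 ->
  c_right (gauss_kernel alpha sigma) d = Finite 0.
Proof.
intros Hs Ha Hm.
assert (Hl : 0 < - alpha / sigma) by (apply Rdiv_lt_0_compat; lra).
apply Rbar_le_antisym.
- replace (Finite 0) with (Finite (Gf alpha sigma d (- alpha / sigma) / (- alpha / sigma))).
  + apply cr_le; assumption.
  + f_equal. rewrite Gf_at_min, Hm by exact Hs. unfold Rdiv. ring.
- apply cr_ge; [exact Hs|]. intros lam Hl2.
  pose proof (Gf_ge2 alpha sigma d lam Hs).
  apply Rdiv_le_0_compat; lra.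
Qed.

Lemma cl_zero alpha sigma d : 0 < sigma -> 0 < alpha -> m0 alpha sigma d = 0 ->
  c_left (gauss_kernel alpha sigma) d = Finite 0.
Proof.
intros Hs Ha Hm.
assert (Hl : - alpha / sigma < 0).
{ assert (0 < alpha / sigma) by (apply Rdiv_lt_0_compat; lra).
  replace (- alpha / sigma) with (- (alpha / sigma)) by (field; lra). lra. }
apply Rbar_le_antisym.
- apply cl_le; [exact Hs|]. intros lam Hl2.
  pose proof (Gf_ge2 alpha sigma d lam Hs).
  apply Rmult_le_reg_r with (- lam); [lra|].
  replace (Gf alpha sigma d lam / lam * - lam) with (- Gf alpha sigma d lam) by (field; lra).
  lra.
- replace (Finite 0) with (Finite (Gf alpha sigma d (- alpha / sigma) / (- alpha / sigma))).
  + apply cl_ge; assumption.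
  + f_equal. rewrite Gf_at_min, Hm by exact Hs. unfold Rdiv. ring.
Qed.

Lemma m0_pos_ge1 alpha sigma d : 1 <= d -> 0 < m0 alpha sigma d.
Proof. intros H. unfold m0. pose proof (exp_pos (- (alpha ^ 2 / (2 * sigma)))). lra. Qed.

Lemma m0_sign alpha sigma d : 0 < sigma -> 0 < d < 1 ->
  let r := alpha / sqrt (2 * sigma) in
  let rho := sqrt (- ln (1 - d)) in
  (r * r < rho * rho -> 0 < m0 alpha sigma d) /\
  (r * r = rho * rho -> m0 alpha sigma d = 0) /\
  (rho * rho < r * r -> m0 alpha sigma d < 0).
Proof.
intros Hs Hd r rho.
assert (Hln : ln (1 - d) < 0).
{ rewrite <- ln_1. apply ln_increasing; lra. }
assert (Hrho : rho * rho = - ln (1 - d)) by (unfold rho; apply sqrt_sqrt; lra).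
assert (Hr : r * r = alpha ^ 2 / (2 * sigma)).
{ unfold r. assert (Hq : sqrt (2 * sigma) * sqrt (2 * sigma) = 2 * sigma) by (apply sqrt_sqrt; lra).
  assert (0 < sqrt (2 * sigma)) by (apply sqrt_lt_R0; lra).
  set (q := sqrt (2 * sigma)) in *. rewrite <- Hq. field. lra. }
assert (Hm : m0 alpha sigma d = exp (- (r * r)) - exp (- (rho * rho))).
{ unfold m0. rewrite Hr, Hrho, Ropp_involutive, exp_ln by lra. ring. }
rewrite Hm. split; [|split].
- intros H. assert (exp (- (rho * rho)) < exp (- (r * r))) by (apply exp_increasing; lra). lra.
- intros H. rewrite H. ring.
- intros H. assert (exp (- (r * r)) < exp (- (rho * rho))) by (apply exp_increasing; lra). lra.
Qed.

Theorem corollary5p1 :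
  exists rstar : R -> R,
  forall (f fp : R -> R) (alpha sigma : R),
    C1_on_01 f fp ->
    f 0 = 0 -> f 1 = 0 ->
    (forall u, 0 < u < 1 -> 0 < f u) ->
    0 < fp 0 ->
    (forall u, 0 < u < 1 -> f u <= fp 0 * u) ->
    0 < sigma ->
    let k := gauss_kernel alpha sigma in
    let r := alpha / sqrt (2 * sigma) in
    let cl := c_left k (fp 0) in
    let cr := c_right k (fp 0) in
    (1 <= fp 0 -> Rbar_lt cl (Finite 0) /\ Rbar_lt (Finite 0) cr)
    /\
    (fp 0 < 1 ->
       0 < rstar (fp 0)
       /\ (rstar (fp 0) < r -> Rbar_lt (Finite 0) cl /\ Rbar_lt cl cr)
       /\ (r = rstar (fp 0) -> cl = Finite 0 /\ Rbar_lt cl cr)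
       /\ (- rstar (fp 0) < r < rstar (fp 0) ->
             Rbar_lt cl (Finite 0) /\ Rbar_lt (Finite 0) cr)
       /\ (r = - rstar (fp 0) -> Rbar_lt cl cr /\ cr = Finite 0)
       /\ (r < - rstar (fp 0) -> Rbar_lt cl cr /\ Rbar_lt cr (Finite 0))).
Proof.
exists (fun d => sqrt (- ln (1 - d))).
intros f fp alpha sigma _ _ _ _ Hd _ Hs.
cbv zeta.
set (d := fp 0) in *.
split.
{ intros H1. split.
  - apply cl_neg; try assumption. apply m0_pos_ge1. exact H1.
  - apply cr_pos; try assumption. apply m0_pos_ge1. exact H1. }
intros H1.
assert (Hd2 : 0 < d < 1) by lra.
destruct (m0_sign alpha sigma d Hs Hd2) as [Mp [Mz Mn]].
set (r := alpha / sqrt (2 * sigma)) in *.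
set (rho := sqrt (- ln (1 - d))) in *.
assert (Hln : ln (1 - d) < 0) by (rewrite <- ln_1; apply ln_increasing; lra).
assert (Hrho : 0 < rho) by (unfold rho; apply sqrt_lt_R0; lra).
assert (Hsq : 0 < sqrt (2 * sigma)) by (apply sqrt_lt_R0; lra).
assert (Har : alpha = r * sqrt (2 * sigma)) by (unfold r; field; lra).
assert (Hlt := cl_lt_cr alpha sigma d Hs Hd).
split; [exact Hrho|].
split; [|split; [|split; [|split]]].
- intros H. split; [|exact Hlt].
  apply cl_pos; try assumption.
  + rewrite Har. apply Rmult_lt_0_compat; lra.
  + apply Mn. nra.
- intros H. split; [|exact Hlt].
  apply cl_zero; try assumption.
  + rewrite Har. apply Rmult_lt_0_compat; lra.
  + apply Mz. rewrite H. reflexivity.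
- intros H. split.
  + apply cl_neg; try assumption. apply Mp. nra.
  + apply cr_pos; try assumption. apply Mp. nra.
- intros H. split; [exact Hlt|].
  apply cr_zero; try assumption.
  + rewrite Har. nra.
  + apply Mz. rewrite H. ring.
- intros H. split; [exact Hlt|].
  apply cr_neg; try assumption.
  + rewrite Har. nra.
  + apply Mn. nra.
Qed.
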